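(* Let $X,Y$ be separable Banach spaces, $S:X\to X$ and $T:Y\to Y$ bounded invertible linear operators, and $\Pi:X\to Y$ a bounded linear surjection with $\Pi\circ S=T\circ\Pi$. Suppose $\Pi$ admits a strong bounded selector. If $T$ is Li-Yorke chaotic, then $S$ is Li-Yorke chaotic.
   Context: $\Pi$ admits a strong bounded selector if there is $L\ge1$ such that for every $y\in Y$ there exists $x\in\Pi^{-1}(y)$ with $\|S^n x\|\le L\|T^n y\|$ and $\|T^n y\|\le L\|S^nx\|$ for all $n\in\mathbb Z$. An operator $T$ is Li-Yorke chaotic if there exists a vector $y$ with $\liminf_{n\to\infty}\|T^ny\|=0$ and $\limsup_{n\to\infty}\|T^ny\|=\infty$. *)

(* Defs.v *)
From HB Require Import structures.
From mathcomp Require Import all_boot all_order all_algebra.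
From mathcomp Require Import all_classical all_reals all_analysis.
Set Implicit Arguments. Unset Strict Implicit. Unset Printing Implicit Defensive.
Import Order.TTheory GRing.Theory Num.Theory.
Import numFieldNormedType.Exports.
Local Open Scope classical_set_scope.
Local Open Scope ring_scope.

Definition separable (X : topologicalType) : Prop :=
  exists D : set X, countable D /\ dense D.

Definition bounded_linear {R : realType} (X Y : normedModType R) (f : X -> Y) : Prop :=
  linear f /\ continuous f.

(* Integer iterate of an invertible map f with inverse finv:
   f^n for n >= 0 and finv^(|n|) for n < 0. *)
Definition zpow {X : Type} (f finv : X -> X) (n : int) : X -> X :=
  match n with
  | Posz k => iter k f
  | Negz k => iter k.+1 finv
  end.

Definition strong_bounded_selector {R : realType} (X Y : normedModType R)
  (S Sinv : X -> X) (T Tinv : Y -> Y) (Pi : X -> Y) : Prop :=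
  exists L : R, 1 <= L /\
    forall y : Y, exists x : X, Pi x = y /\
      forall n : int,
        `|zpow S Sinv n x| <= L * `|zpow T Tinv n y| /\
        `|zpow T Tinv n y| <= L * `|zpow S Sinv n x|.

Definition li_yorke_chaotic {R : realType} (Y : normedModType R) (T : Y -> Y) : Prop :=
  exists y : Y,
    limn_einf (fun n : nat => (`|iter n T y|)%:E) = 0%E /\
    limn_esup (fun n : nat => (`|iter n T y|)%:E) = +oo%E.

(* Main.v *)
Require Import Defs.
From HB Require Import structures.
From mathcomp Require Import all_boot all_order all_algebra.
From mathcomp Require Import all_classical all_reals all_analysis.
Import Order.TTheory GRing.Theory Num.Theory.
Import numFieldNormedType.Exports.
Local Open Scope classical_set_scope.
Local Open Scope ring_scope.
Section S.
Local Open Scope ereal_scope.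
Context {R : realType}.
Implicit Types u v : (\bar R)^nat.

Lemma esups_le u v : (forall n, u n <= v n) -> forall n, esups u n <= esups v n.
Proof.
move=> uv n /=; apply: ge_ereal_sup => _ [k /= nk <-].
by apply: le_ereal_sup_tmp; exists (v k); [exists k|exact: uv].
Qed.

Lemma einfs_le u v : (forall n, u n <= v n) -> forall n, einfs u n <= einfs v n.
Proof.
move=> uv n /=; apply: le_ereal_inf_tmp => _ [k /= nk <-].
by apply: le_trans (uv k); apply: ereal_inf_lbound; exists k.
Qed.

Lemma limn_esup_le u v : (forall n, u n <= v n) -> limn_esup u <= limn_esup v.
Proof.
move=> uv; rewrite !limn_esup_lim; apply: lee_lim; [exact: is_cvg_esups|exact: is_cvg_esups|].
by apply: nearW; exact: esups_le.
Qed.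

Lemma limn_einf_le u v : (forall n, u n <= v n) -> limn_einf u <= limn_einf v.
Proof.
move=> uv; rewrite !limn_einf_lim; apply: lee_lim; [exact: is_cvg_einfs|exact: is_cvg_einfs|].
by apply: nearW; exact: einfs_le.
Qed.

Lemma limn_einfZ u (c : R) : (0 < c)%R ->
  limn_einf (fun n => c%:E * u n) = c%:E * limn_einf u.
Proof.
move=> c0; rewrite !limn_einf_lim -limeMl //; last exact: is_cvg_einfs.
suff -> : einfs (fun n => c%:E * u n) = (fun n => c%:E * einfs u n) by [].
apply/funext => n /=.
by rewrite -ereal_inf_pZl // image_comp.
Qed.

Lemma limn_esupZ u (c : R) : (0 < c)%R ->
  limn_esup (fun n => c%:E * u n) = c%:E * limn_esup u.
Proof.
move=> c0; rewrite !limn_esup_lim -limeMl //; last exact: is_cvg_esups.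
suff -> : esups (fun n => c%:E * u n) = (fun n => c%:E * esups u n) by [].
apply/funext => n /=.
rewrite -ereal_supZl.
- by rewrite image_comp.
- by apply/set0P; exists (u n); exists n => /=.
- exact: ltW.
Qed.
End S.

Theorem lemma3p3 (R : realType) (X Y : completeNormedModType R)
  (S Sinv : X -> X) (T Tinv : Y -> Y) (Pi : X -> Y) :
  separable X -> separable Y ->
  bounded_linear S -> bounded_linear Sinv ->
  cancel S Sinv -> cancel Sinv S ->
  bounded_linear T -> bounded_linear Tinv ->
  cancel T Tinv -> cancel Tinv T ->
  bounded_linear Pi -> (forall y : Y, exists x : X, Pi x = y) ->
  (forall x, Pi (S x) = T (Pi x)) ->
  strong_bounded_selector S Sinv T Tinv Pi ->
  li_yorke_chaotic T -> li_yorke_chaotic S.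
Proof.
move=> _ _ _ _ _ _ _ _ _ _ _ _ _ [L [L1 sel]] [y [yinf ysup]].
have [x [_ hx]] := sel y.
have L0 : (0 < L)%R by apply: lt_le_trans L1.
have h1 : forall n : nat, ((`|iter n S x|)%:E <= L%:E * (`|iter n T y|)%:E)%E.
  by move=> n; rewrite -EFinM lee_fin; exact: (hx (Posz n)).1.
have h2 : forall n : nat, ((`|iter n T y|)%:E <= L%:E * (`|iter n S x|)%:E)%E.
  by move=> n; rewrite -EFinM lee_fin; exact: (hx (Posz n)).2.
have ge0 : (0 <= limn_einf (fun n : nat => (`|iter n S x|)%:E))%E.
  have -> : (0 = limn_einf (fun n : nat => (0:R)%:E))%E.
    by rewrite (cvg_limn_einf_sup (@cvg_cst _ ((0:R)%:E) nat \oo _)).1.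
  by apply: limn_einf_le => n; rewrite lee_fin.
exists x; split.
  apply/eqP; rewrite eq_le ge0 andbT.
  have := limn_einf_le _ _ h1; rewrite limn_einfZ // yinf mule0.
  by [].
have H := limn_esup_le _ _ h2; rewrite ysup limn_esupZ // in H.
move: H; case E: (limn_esup (fun n : nat => (`|iter n S x|)%:E)) => [r||] //.
- by rewrite mulrNy gtr0_sg // mul1e.
Qed.
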